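(* Let $G$ be a group generated by $x_1,\dots,x_n$, with finite commutator subgroup $C=[G,G]$, such that $G/C$ is free abelian of rank $n$ with basis the images of $x_1,\dots,x_n$. Let $P=X\cap\mathcal C_G(C)$ with $X=\{g_{\mathbf m}\in T: c_{\,x_1^{m_1}\cdots x_{k-1}^{m_{k-1}},\,x_k}=e \text{ for all } k=1,\dots,n\}$, and $Q=P\cap Z$, where $Z$ is the center of $G$. Then for $q\in G$: $q\in Q$ if and only if $q\,t=t\,q=(q\,t)^{ab}$ for every $t\in T$.
   Context: Notation: $\bar g=g^{-1}$, $c_{gh}=\bar g\,\bar h\,g\,h$; $\mathcal C_G(C)$ is the centralizer of $C$ in $G$. For $\mathbf r\in\mathbb Z^n$, $g_{\mathbf r}=x_1^{r_1}\cdots x_n^{r_n}$, and $T=\{g_{\mathbf r}\}$. Every $g\in G$ decomposes uniquely as $g=g_{\mathbf r}c$ with $c\in C$, and $g^{ab}$ denotes $g_{\mathbf r}$. *)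

(* Defs.v *)
From Stdlib Require Import ZArith List.

Section GroupDefs.
Context {G : Type} (mul : G -> G -> G) (inv : G -> G) (e : G).

Definition is_group : Prop :=
  (forall a b c, mul a (mul b c) = mul (mul a b) c) /\
  (forall a, mul e a = a /\ mul a e = a) /\
  (forall a, mul (inv a) a = e /\ mul a (inv a) = e).

Inductive generated (S : G -> Prop) : G -> Prop :=
| gen_one : generated S e
| gen_in : forall g, S g -> generated S g
| gen_mul : forall g h, generated S g -> generated S h -> generated S (mul g h)
| gen_inv : forall g, generated S g -> generated S (inv g).

Definition comm (g h : G) : G := mul (mul (mul (inv g) (inv h)) g) h.

Definition commutator_subgroup : G -> Prop :=
  generated (fun c => exists a b, c = comm a b).

Definition finite_set (S : G -> Prop) : Prop :=
  exists l : list G, forall g, S g -> In g l.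

Fixpoint npow (g : G) (k : nat) : G :=
  match k with O => e | S k => mul g (npow g k) end.

Definition zpow (g : G) (z : Z) : G :=
  match z with
  | Z0 => e
  | Zpos p => npow g (Pos.to_nat p)
  | Zneg p => inv (npow g (Pos.to_nat p))
  end.

(* gprod x r k = x_0^{r_0} x_1^{r_1} ... x_{k-1}^{r_{k-1}} (0-indexed);
   g_r = gprod x r n *)
Fixpoint gprod (x : nat -> G) (r : nat -> Z) (k : nat) : G :=
  match k with
  | O => e
  | S k => mul (gprod x r k) (zpow (x k) (r k))
  end.

Definition Tset (n : nat) (x : nat -> G) (t : G) : Prop :=
  exists r : nat -> Z, t = gprod x r n.

(* h is the abelian part g^{ab} of g : g = h c with h = g_r in T and c in C *)
Definition is_ab (n : nat) (x : nat -> G) (g h : G) : Prop :=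
  exists r : nat -> Z, h = gprod x r n /\ commutator_subgroup (mul (inv h) g).

Definition Xset (n : nat) (x : nat -> G) (g : G) : Prop :=
  exists m : nat -> Z, g = gprod x m n /\
    (forall k, (k < n)%nat -> comm (gprod x m k) (x k) = e).

Definition centralizes_C (g : G) : Prop :=
  forall c, commutator_subgroup c -> mul g c = mul c g.

Definition central (g : G) : Prop := forall h, mul g h = mul h g.

Definition Pset (n : nat) (x : nat -> G) (g : G) : Prop :=
  Xset n x g /\ centralizes_C g.

Definition Qset (n : nat) (x : nat -> G) (g : G) : Prop :=
  Pset n x g /\ central g.

End GroupDefs.

(* Main.v *)
Require Import Defs.
From Stdlib Require Import ZArith List Lia.

Section Aux.
Context (G : Type) (mul : G -> G -> G) (inv : G -> G) (e : G) (x : nat -> G).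
Context (Hgrp : is_group mul inv e).

Local Notation gp := (gprod mul inv e x).
Local Notation C := (commutator_subgroup mul inv e).

Lemma mulA a b c : mul a (mul b c) = mul (mul a b) c.
Proof. destruct Hgrp as [H _]; apply H. Qed.
Lemma m1l a : mul e a = a.
Proof. destruct Hgrp as [_ [H _]]; apply H. Qed.
Lemma m1r a : mul a e = a.
Proof. destruct Hgrp as [_ [H _]]; apply H. Qed.
Lemma mVl a : mul (inv a) a = e.
Proof. destruct Hgrp as [_ [_ H]]; apply H. Qed.
Lemma mVr a : mul a (inv a) = e.
Proof. destruct Hgrp as [_ [_ H]]; apply H. Qed.

Lemma cancel_l a b c : mul a b = mul a c -> b = c.
Proof.
  intro H. rewrite <- (m1l b), <- (m1l c), <- (mVl a), <- !mulA, H. reflexivity.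
Qed.
Lemma cancel_r a b c : mul b a = mul c a -> b = c.
Proof.
  intro H. rewrite <- (m1r b), <- (m1r c), <- (mVr a), !mulA, H. reflexivity.
Qed.
Lemma inv_uniq a b : mul a b = e -> b = inv a.
Proof. intro H. apply (cancel_l a). rewrite H, mVr. reflexivity. Qed.
Lemma inv_mul a b : inv (mul a b) = mul (inv b) (inv a).
Proof.
  symmetry. apply inv_uniq. rewrite <- !mulA, (mulA b), mVr, m1l, mVr. reflexivity.
Qed.
Lemma inv_inv a : inv (inv a) = a.
Proof. symmetry. apply inv_uniq. apply mVl. Qed.
Lemma inv_e : inv e = e.
Proof. symmetry. apply inv_uniq. apply m1l. Qed.

Definition commutes a b := mul a b = mul b a.

Lemma com_inv a b : commutes a b -> commutes a (inv b).
Proof.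
  unfold commutes; intro H.
  apply (cancel_l b). rewrite mulA, <- H, <- mulA, mVr, m1r, mulA, mVr, m1l. reflexivity.
Qed.
Lemma com_mul a b c : commutes a b -> commutes a c -> commutes a (mul b c).
Proof.
  unfold commutes; intros H1 H2. rewrite mulA, H1, <- mulA, H2, mulA. reflexivity.
Qed.
Lemma com_e a : commutes a e.
Proof. unfold commutes; rewrite m1l, m1r; reflexivity. Qed.
Lemma com_npow a b k : commutes a b -> commutes a (npow mul e b k).
Proof. intro H; induction k; simpl; [apply com_e | apply com_mul; auto]. Qed.
Lemma com_zpow a b z : commutes a b -> commutes a (zpow mul inv e b z).
Proof. intro H; destruct z; simpl; [apply com_e | apply com_npow; auto | apply com_inv, com_npow; auto]. Qed.

Lemma zpow_nat g k : zpow mul inv e g (Z.of_nat k) = npow mul e g k.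
Proof. destruct k; simpl; [reflexivity|]. rewrite SuccNat2Pos.id_succ. reflexivity. Qed.
Lemma zpow_nnat g k : zpow mul inv e g (- Z.of_nat k) = inv (npow mul e g k).
Proof. destruct k; simpl; [rewrite inv_e; reflexivity|]. rewrite SuccNat2Pos.id_succ. reflexivity. Qed.
Lemma Zcases (z : Z) : exists k, z = Z.of_nat k \/ z = (- Z.of_nat k)%Z.
Proof. exists (Z.to_nat (Z.abs z)). lia. Qed.

Lemma zpow_succ g z : zpow mul inv e g (z + 1) = mul g (zpow mul inv e g z).
Proof.
  destruct (Zcases z) as [k [-> | ->]].
  - replace (Z.of_nat k + 1)%Z with (Z.of_nat (S k)) by lia.
    rewrite !zpow_nat. reflexivity.
  - destruct k as [|k].
    + simpl. rewrite m1r. reflexivity.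
    + replace (- Z.of_nat (S k) + 1)%Z with (- Z.of_nat k)%Z by lia.
      rewrite !zpow_nnat. simpl. rewrite inv_mul.
      assert (Hc : commutes g (inv (npow mul e g k))).
      { apply com_inv, com_npow. reflexivity. }
      rewrite mulA, Hc, <- mulA, mVr, m1r. reflexivity.
Qed.
Lemma zpow_pred g z : zpow mul inv e g (z - 1) = mul (inv g) (zpow mul inv e g z).
Proof.
  assert (H := zpow_succ g (z - 1)). replace (z - 1 + 1)%Z with z in H by lia.
  rewrite H, mulA, mVl, m1l. reflexivity.
Qed.
Lemma zpow_add g a b : zpow mul inv e g (a + b) = mul (zpow mul inv e g a) (zpow mul inv e g b).
Proof.
  destruct (Zcases a) as [k [-> | ->]].
  - induction k.
    + simpl. rewrite m1l. reflexivity.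
    + replace (Z.of_nat (S k) + b)%Z with ((Z.of_nat k + b) + 1)%Z by lia.
      replace (Z.of_nat (S k)) with (Z.of_nat k + 1)%Z by lia.
      rewrite !zpow_succ, IHk, mulA. reflexivity.
  - induction k.
    + simpl. rewrite m1l. reflexivity.
    + replace (- Z.of_nat (S k) + b)%Z with ((- Z.of_nat k + b) - 1)%Z by lia.
      replace (- Z.of_nat (S k))%Z with (- Z.of_nat k - 1)%Z by lia.
      rewrite !zpow_pred, IHk, mulA. reflexivity.
Qed.
Lemma zpow1 g : zpow mul inv e g 1 = g.
Proof. simpl. apply m1r. Qed.

Lemma comm_e_com a b : comm mul inv a b = e -> commutes a b.
Proof.
  unfold comm, commutes; intro H.
  assert (H' : mul (inv (mul b a)) (mul a b) = e).
  { rewrite inv_mul, <- H, !mulA. reflexivity. }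
  apply inv_uniq in H'. rewrite inv_inv in H'. exact H'.
Qed.
Lemma com_comm_e a b : commutes a b -> comm mul inv a b = e.
Proof.
  unfold comm, commutes; intro H.
  transitivity (mul (inv (mul b a)) (mul a b)).
  { rewrite inv_mul, !mulA. reflexivity. }
  rewrite H, mVl. reflexivity.
Qed.

Lemma gprod_ext r s k : (forall i, (i < k)%nat -> r i = s i) -> gp r k = gp s k.
Proof.
  induction k; intro H; simpl; [reflexivity|].
  rewrite IHk by (intros; apply H; lia). rewrite H by lia. reflexivity.
Qed.
Lemma gprod_zero k : gp (fun _ => 0%Z) k = e.
Proof. induction k; simpl; [reflexivity|]. rewrite IHk. apply m1r. Qed.

Definition delta (k : nat) : nat -> Z := fun i => if Nat.eqb i k then 1%Z else 0%Z.

Lemma gprod_delta k j : gp (delta k) j = if Nat.leb j k then e else x k.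
Proof.
  induction j; [reflexivity|]. cbn [gprod].
  rewrite IHj. unfold delta.
  destruct (Nat.eqb_spec j k).
  - subst. rewrite zpow1. destruct (Nat.leb_spec k k), (Nat.leb_spec (S k) k); try lia.
    apply m1l.
  - change (zpow mul inv e (x j) 0) with e. rewrite m1r.
    destruct (Nat.leb_spec j k), (Nat.leb_spec (S j) k); try lia; reflexivity.
Qed.

Lemma lemA r m k : (forall j, (j < k)%nat -> commutes (gp m j) (x j)) ->
  mul (gp r k) (gp m k) = gp (fun i => (r i + m i)%Z) k.
Proof.
  induction k; intro H; simpl.
  - apply m1r.
  - assert (Hc : commutes (gp m k) (zpow mul inv e (x k) (r k))).
    { apply com_zpow, H. lia. }
    rewrite <- !mulA. rewrite (mulA (zpow mul inv e (x k) (r k))), <- Hc, <- mulA.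
    rewrite mulA, IHk by (intros; apply H; lia). rewrite zpow_add. reflexivity.
Qed.

Definition equiv a b := C (mul (inv a) b).

Lemma C_conj y c : C y -> C (mul (inv c) (mul y c)).
Proof.
  intro H.
  assert (E : mul (inv c) (mul y c) = mul y (comm mul inv y c)).
  { unfold comm. rewrite !mulA, mVr, m1l. reflexivity. }
  rewrite E. apply gen_mul; [exact H|]. apply gen_in. eauto.
Qed.
Lemma eq_refl' a b : a = b -> equiv a b.
Proof. intros ->. unfold equiv. rewrite mVl. apply gen_one. Qed.
Lemma eq_sym' a b : equiv a b -> equiv b a.
Proof.
  unfold equiv; intro H. apply gen_inv in H. rewrite inv_mul, inv_inv in H. exact H.
Qed.
Lemma eq_trans' a b c : equiv a b -> equiv b c -> equiv a c.
Proof.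
  unfold equiv; intros H1 H2. pose proof (gen_mul _ _ _ _ _ _ H1 H2) as H.
  rewrite <- mulA, (mulA b), mVr, m1l in H. exact H.
Qed.
Lemma eq_mul_l a b c : equiv a b -> equiv (mul c a) (mul c b).
Proof.
  unfold equiv; intro H. rewrite inv_mul, <- mulA, (mulA (inv c)), mVl, m1l. exact H.
Qed.
Lemma eq_mul_r a b c : equiv a b -> equiv (mul a c) (mul b c).
Proof.
  unfold equiv; intro H. rewrite inv_mul, <- mulA, (mulA (inv a) b c). apply C_conj.
  exact H.
Qed.
Lemma eq_swap a b : equiv (mul a b) (mul b a).
Proof.
  unfold equiv. rewrite inv_mul.
  replace (mul (mul (inv b) (inv a)) (mul b a)) with (comm mul inv b a)
    by (unfold comm; rewrite !mulA; reflexivity).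
  apply gen_in. eauto.
Qed.

Lemma lemB r m k : equiv (mul (gp r k) (gp m k)) (gp (fun i => (r i + m i)%Z) k).
Proof.
  induction k; simpl.
  - apply eq_refl'. apply m1r.
  - rewrite zpow_add.
    set (A := gp r k) in *. set (B := gp m k) in *.
    set (Xr := zpow mul inv e (x k) (r k)). set (Xm := zpow mul inv e (x k) (m k)).
    apply eq_trans' with (mul A (mul (mul Xr B) Xm)).
    { apply eq_refl'. rewrite !mulA. reflexivity. }
    apply eq_trans' with (mul A (mul (mul B Xr) Xm)).
    { apply eq_mul_l, eq_mul_r, eq_swap. }
    apply eq_trans' with (mul (mul A B) (mul Xr Xm)).
    { apply eq_refl'. rewrite !mulA. reflexivity. }
    apply eq_mul_r. exact IHk.
Qed.

Lemma down a b r s j d : mul a (gp r (j + d)) = mul b (gp s (j + d)) ->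
  (forall i, (j <= i < j + d)%nat -> r i = s i) -> mul a (gp r j) = mul b (gp s j).
Proof.
  induction d; intros H Hrs.
  - rewrite Nat.add_0_r in H. exact H.
  - apply IHd; [| intros; apply Hrs; lia].
    rewrite Nat.add_succ_r in H. simpl in H.
    rewrite (Hrs (j + d)%nat) in H by lia.
    rewrite !mulA in H. apply cancel_r in H. exact H.
Qed.

End Aux.

Theorem proposition6 (G : Type) (mul : G -> G -> G) (inv : G -> G) (e : G)
  (n : nat) (x : nat -> G)
  (Hgrp : is_group mul inv e)
  (Hgen : forall g, generated mul inv e (fun h => exists i, (i < n)%nat /\ h = x i) g)
  (Hfin : finite_set (commutator_subgroup mul inv e))
  (Hspan : forall g, exists r : nat -> Z,
      commutator_subgroup mul inv e (mul (inv (gprod mul inv e x r n)) g))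
  (Hindep : forall r s : nat -> Z,
      commutator_subgroup mul inv e
        (mul (inv (gprod mul inv e x r n)) (gprod mul inv e x s n)) ->
      forall i, (i < n)%nat -> r i = s i) :
  forall q : G,
    Qset mul inv e n x q <->
    (forall t, Tset mul inv e n x t ->
       mul q t = mul t q /\ is_ab mul inv e n x (mul q t) (mul q t)).
Proof.
  intro q; split.
  - intros [[[m [Hq HX]] _] Hc] t [r Ht]. subst t. split; [apply Hc|].
    exists (fun i => (r i + m i)%Z). split.
    + rewrite Hc, Hq. apply lemA; [exact Hgrp|].
      intros j Hj. apply (comm_e_com _ _ inv e Hgrp). apply HX. lia.
    + rewrite (mVl _ _ inv e Hgrp). apply gen_one.
  - intro H.
    assert (HT : forall k, (k < n)%nat -> Tset mul inv e n x (x k)).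
    { intros k Hk. exists (delta k). rewrite gprod_delta by exact Hgrp.
      destruct (Nat.leb_spec n k); [lia|reflexivity]. }
    destruct (H e) as [_ [m [Hm _]]].
    { exists (fun _ => 0%Z). rewrite gprod_zero by exact Hgrp. reflexivity. }
    rewrite (m1r _ _ inv e Hgrp) in Hm.
    assert (Hcen : central mul q).
    { intro h. pose proof (Hgen h) as Hh. induction Hh.
      - apply (com_e _ _ inv e Hgrp).
      - destruct H0 as [i [Hi ->]]. apply (H _ (HT i Hi)).
      - apply (com_mul _ _ inv e Hgrp); auto.
      - apply (com_inv _ _ inv e Hgrp); auto. }
    split; [split|exact Hcen].
    + exists m. split; [exact Hm|]. intros k Hk.
      apply (com_comm_e _ _ inv e Hgrp).
      destruct (H (x k) (HT k Hk)) as [Hqx [s [Hs _]]].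
      assert (E1 : mul (gprod mul inv e x (delta k) n) (gprod mul inv e x m n)
                   = gprod mul inv e x s n).
      { rewrite gprod_delta by exact Hgrp. destruct (Nat.leb_spec n k); [lia|].
        rewrite <- Hm, <- Hqx. exact Hs. }
      assert (E2 : gprod mul inv e x s n
                   = gprod mul inv e x (fun i => (delta k i + m i)%Z) n).
      { apply gprod_ext. intros i Hi. symmetry. apply (Hindep (fun i => (delta k i + m i)%Z) s); [|exact Hi].
        apply eq_sym'; [exact Hgrp|]. rewrite <- E1. apply lemB. exact Hgrp. }
      rewrite E2, gprod_delta in E1 by exact Hgrp.
      destruct (Nat.leb_spec n k); [lia|].
      assert (E3 : mul (x k) (gprod mul inv e x m (S k + (n - S k)))
         = mul e (gprod mul inv e x (fun i => (delta k i + m i)%Z) (S k + (n - S k)))).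
      { rewrite (m1l _ _ inv e Hgrp). replace (S k + (n - S k))%nat with n by lia. exact E1. }
      clear E1. rename E3 into E1.
      apply down in E1; [| exact Hgrp |].
      2:{ intros i Hi. unfold delta. destruct (Nat.eqb_spec i k); [lia|]. reflexivity. }
      simpl in E1. rewrite (m1l _ _ inv e Hgrp) in E1.
      rewrite (gprod_ext _ _ inv e x (fun i => (delta k i + m i)%Z) m k) in E1.
      2:{ intros i Hi. unfold delta. destruct (Nat.eqb_spec i k); [lia|]. reflexivity. }
      unfold delta in E1. rewrite Nat.eqb_refl in E1.
      rewrite (zpow_add _ _ inv e Hgrp), (zpow1 _ _ inv e Hgrp) in E1.
      rewrite !(mulA _ _ inv e Hgrp) in E1.
      apply (cancel_r _ _ inv e Hgrp) in E1. unfold commutes. symmetry. exact E1.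
    + intros c _. apply Hcen.
Qed.
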